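(* $\displaystyle\liminf_{k\to\infty}\frac{\gamma(k)}{k}\leq\frac{9}{10}$ and $\displaystyle\limsup_{k\to\infty}\frac{\gamma(k)}{k}\leq\frac32$.
   Context: The Thue–Morse word is $\mathbf t=\mathbf t_1\mathbf t_2\cdots$ where $\mathbf t_i\in\{0,1\}$ has the parity of the number of $1$'s in the binary expansion of $i-1$. For positive integers $\alpha\le\beta$, $\langle\alpha,\beta\rangle=\mathbf t_\alpha\cdots\mathbf t_\beta$. A $k$-anti-power is a word $w_1\cdots w_k$ with $w_1,\dots,w_k$ pairwise distinct words of equal length. $\mathcal F(k)$ is the set of odd positive integers $m$ such that $\langle 1,km\rangle$ is a $k$-anti-power (this set is nonempty for every $k$). $\gamma(k)=\min\mathcal F(k)$. *)

(* Defs.v *)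
From HB Require Import structures.
From mathcomp Require Import all_boot all_order all_algebra.
From Stdlib Require Import ClassicalEpsilon.
Set Implicit Arguments. Unset Strict Implicit. Unset Printing Implicit Defensive.

(* number of 1's in the binary expansion of n (fuel n is enough) *)
Fixpoint popcount_fuel (fuel n : nat) : nat :=
  match fuel with
  | 0 => 0
  | f.+1 => odd n + popcount_fuel f n./2
  end.
Definition popcount (n : nat) : nat := popcount_fuel n n.

(* Thue--Morse word, 1-indexed as in the paper: t_i = parity of popcount (i-1). *)
Definition tm (i : nat) : bool := odd (popcount i.-1).

Definition tm_factor (alpha beta : nat) : seq bool :=
  mkseq (fun j => tm (alpha + j)) (beta.+1 - alpha).

(* w is a k-anti-power: w = w_1 ... w_k with the w_j pairwise distinct
   words of equal length (that length is necessarily size w / k). *)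
Definition is_antipower {T : eqType} (k : nat) (w : seq T) : bool :=
  let L := size w %/ k in
  (k * L == size w) &&
  uniq [seq take L (drop (j * L) w) | j <- iota 0 k].

Definition inF (k m : nat) : bool :=
  odd m && is_antipower k (tm_factor 1 (k * m)).

(* gamma(k) = min F(k) (F(k) is nonempty for every k; default 0 otherwise) *)
Definition gamma (k : nat) : nat :=
  match excluded_middle_informative (exists m, inF k m) with
  | left H => ex_minn H
  | right _ => 0
  end.

(* Main.v *)
Require Import Defs.
From HB Require Import structures.
From mathcomp Require Import all_boot all_order all_algebra.
From mathcomp Require Import zify ring lra.
From Stdlib Require Import ClassicalEpsilon.
Import Order.TTheory GRing.Theory Num.Theory.


Lemma pf0 f : popcount_fuel f 0 = 0.
Proof. by elim: f => //= f ->. Qed.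

Lemma pf_indep f g n : n <= f -> n <= g -> popcount_fuel f n = popcount_fuel g n.
Proof.
elim: f g n => [|f IH] [|g] n /=.
- by [].
- by rewrite leqn0 => /eqP -> _; rewrite pf0.
- by move=> _; rewrite leqn0 => /eqP ->; rewrite pf0.
- move=> Hf Hg; congr (_ + _); apply: IH; lia.
Qed.

Definition tt n := odd (popcount n).

Lemma pfS f n : popcount_fuel f.+1 n = odd n + popcount_fuel f n./2.
Proof. by []. Qed.

Lemma ttS2 n (b : bool) : tt (2 * n + b) = tt n (+) b.
Proof.
rewrite /tt /popcount.
case: b => /=.
- have -> : 2 * n + 1 = (2 * n).+1 by lia.
  rewrite pfS (_ : (2 * n).+1./2 = n); last by lia.
  rewrite oddS oddM /= (@pf_indep (2*n) (n)) //; last by lia.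
  by rewrite oddD /=; case: (odd _).
- rewrite addn0; case: n => [|n]; first by [].
  have -> : 2 * n.+1 = (2 * n + 1).+1 by lia.
  rewrite pfS (_ : (2 * n + 1).+1./2 = n.+1); last by lia.
  rewrite (_ : odd (2 * n + 1).+1 = false); last by rewrite oddS oddD oddM.
  rewrite add0n (@pf_indep (2*n+1) (n.+1)) //; last by lia.
  by rewrite addbF.
Qed.

Lemma tt2 n : tt (2 * n) = tt n.
Proof. by have := ttS2 n false; rewrite addn0 addbF. Qed.
Lemma tt2S n : tt (2 * n + 1) = ~~ tt n.
Proof. by have := ttS2 n true; rewrite addbT. Qed.

Lemma ttE b X o : o < 2 ^ b -> tt (2 ^ b * X + o) = tt X (+) tt o.
Proof.
elim: b X o => [|b IH] X o.
  by rewrite expn0 ltnS leqn0 mul1n => /eqP ->; rewrite addn0 /tt /popcount /= addbF.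
move=> Ho.
have Eo : o = 2 * o./2 + odd o by rewrite addnC mul2n odd_double_half.
have Ho2 : o./2 < 2 ^ b by rewrite expnS in Ho; lia.
rewrite {1}Eo (_ : 2 ^ b.+1 * X + (2 * o./2 + odd o) = 2 * (2 ^ b * X + o./2) + odd o); last by rewrite expnS; lia.
have Eo' : tt o = tt o./2 (+) odd o by rewrite {1}Eo ttS2.
by rewrite ttS2 IH // Eo' addbA.
Qed.

Lemma no3 w : ~~ [&& tt w == tt (w + 1) & tt (w+1) == tt (w+2)].
Proof.
have Ew : w = 2 * w./2 + odd w by rewrite addnC mul2n odd_double_half.
move: Ew; case: (odd w); set u := w./2 => ->.
- rewrite (_ : 2 * u + true + 1 = 2 * (u + 1)); last by lia.
  rewrite (_ : 2 * u + true + 2 = 2 * (u + 1) + 1); last by lia.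
  rewrite (_ : 2 * u + true = 2 * u + 1); last by lia.
  by rewrite !tt2 !tt2S; case: (tt u); case: (tt (u+1)).
- rewrite /= addn0 (_ : 2 * u + 2 = 2 * (u + 1)); last by lia.
  by rewrite !tt2 !tt2S; case: (tt u).
Qed.

Lemma sync_eo u v : ~~ [&& tt (2*u) == tt (2*v+1), tt (2*u+1) == tt (2*v+2),
   tt (2*u+2) == tt (2*v+3) & tt (2*u+3) == tt (2*v+4)].
Proof.
have := no3 v.
have E1 : 2*v+2 = 2*(v+1) by lia.
have E2 : 2*u+2 = 2*(u+1) by lia.
have E3 : 2*v+3 = 2*(v+1)+1 by lia.
have E4 : 2*u+3 = 2*(u+1)+1 by lia.
have E5 : 2*v+4 = 2*(v+2) by lia.
rewrite E1 E2 E3 E4 E5 !tt2 !tt2S.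
by case: (tt u); case: (tt (u+1)); case: (tt v); case: (tt (v+1)); case: (tt (v+2)).
Qed.

Lemma sync_eo' a b : ~~ odd a -> odd b -> ~~ [&& tt a == tt b, tt (a+1) == tt (b+1),
   tt (a+2) == tt (b+2) & tt (a+3) == tt (b+3)].
Proof.
move=> Ha Hb.
have Ea : a = 2 * a./2 by rewrite -[LHS]odd_double_half (negbTE Ha) add0n mul2n.
have Eb : b = 2 * b./2 + 1 by rewrite -[LHS]odd_double_half Hb addnC mul2n.
have := sync_eo a./2 b./2.
have -> : 2 * b./2 + 2 = b + 1 by lia.
have -> : 2 * b./2 + 3 = b + 2 by lia.
have -> : 2 * b./2 + 4 = b + 3 by lia.
by rewrite -Ea -Eb.
Qed.

Lemma pick4 (f g : nat -> bool) : ~~ [&& f 0 == g 0, f 1 == g 1, f 2 == g 2 & f 3 == g 3] ->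
  exists2 s, s < 4 & f s != g s.
Proof.
case/nandP => [H|]; first by exists 0.
case/nandP => [H|]; first by exists 1.
case/nandP => [H|H]; first by exists 2.
by exists 3.
Qed.

Lemma sync4 X D : odd D -> exists2 s, s < 4 & tt (X + s) != tt (X + D + s).
Proof.
move=> HD.
apply: (@pick4 (fun s => tt (X + s)) (fun s => tt (X + D + s))).
rewrite !addn0.
case: (boolP (odd X)) => HX.
- have HY : ~~ odd (X + D) by rewrite oddD HX HD.
  have := @sync_eo' (X+D) X HY HX.
  by rewrite !(eq_sym (tt (X + D + _))) (eq_sym (tt (X + D))).
- have HY : odd (X + D) by rewrite oddD (negbTE HX) HD.
  exact: (@sync_eo' X (X+D) HX HY).
Qed.


Lemma shiftB b n D : (tt (n + 2 ^ b * D) == tt n) = (tt (n %/ 2 ^ b + D) == tt (n %/ 2 ^ b)).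
Proof.
have Hb : 0 < 2 ^ b by rewrite expn_gt0.
have Hr : n %% 2 ^ b < 2 ^ b by rewrite ltn_mod.
have En : n = 2 ^ b * (n %/ 2 ^ b) + n %% 2 ^ b by rewrite mulnC -divn_eq.
have En' : n + 2 ^ b * D = 2 ^ b * (n %/ 2 ^ b + D) + n %% 2 ^ b by rewrite {1}En; lia.
have Etn : tt n = tt (n %/ 2 ^ b) (+) tt (n %% 2 ^ b) by rewrite {1}En ttE.
rewrite En' ttE // Etn.
by case: (tt (n %% 2 ^ b)); case: (tt (n %/ 2 ^ b + D)); case: (tt (n %/ 2 ^ b)).
Qed.

Lemma tt3 : tt 3 = false. Proof. by []. Qed.
Lemma tt1 : tt 1 = true. Proof. by []. Qed.
Lemma tt2' : tt 2 = true. Proof. by []. Qed.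

Lemma L3H (c z : nat) : z < 2 * (2 ^ c) -> tt (3 * (2 ^ c) + z) = tt z.
Proof.
move=> Hz.
case: (ltnP z (2 ^ c)) => Hz2.
- by rewrite mulnC ttE // tt3.
- have E1 : 3 * 2 ^ c + z = 2 ^ c.+1 * 2 + (z - 2 ^ c) by rewrite expnS; lia.
  have E2 : z = 2 ^ c * 1 + (z - 2 ^ c) by lia.
  have H1 : z - 2 ^ c < 2 ^ c.+1 by rewrite expnS; lia.
  have H2 : z - 2 ^ c < 2 ^ c by rewrite expnS in H1; lia.
  by rewrite E1 ttE // {2}E2 ttE // tt1 tt2'.
Qed.

Lemma Y3 Y : (tt Y == tt (Y + 3)) || (tt (Y + 1) == tt (Y + 4)).
Proof.
have EY : Y = 2 * Y./2 + odd Y by rewrite addnC mul2n odd_double_half.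
have := no3 Y./2.
move: EY; case: (odd Y); set u := Y./2 => ->.
- have -> : 2 * u + true = 2 * u + 1 by [].
  have -> : 2 * u + 1 + 3 = 2 * (u + 2) by lia.
  have -> : 2 * u + 1 + 1 = 2 * (u + 1) by lia.
  have -> : 2 * u + 1 + 4 = 2 * (u + 2) + 1 by lia.
  rewrite !tt2 !tt2S.
  by case: (tt u); case: (tt (u+1)); case: (tt (u+2)).
- have -> : 2 * u + false = 2 * u by rewrite addn0.
  have -> : 2 * u + 3 = 2 * (u + 1) + 1 by lia.
  have -> : 2 * u + 4 = 2 * (u + 2) by lia.
  rewrite !tt2 !tt2S.
  by case: (tt u); case: (tt (u+1)); case: (tt (u+2)).
Qed.

Lemma divB_add B x s : 0 < B -> (x + B * s) %/ B = x %/ B + s.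
Proof. by move=> HB; rewrite addnC mulnC divnMDl // addnC. Qed.

Lemma witG m i j b D : i < j -> j - i = 2 ^ b * D -> odd D -> odd m -> 3 * 2 ^ b < m ->
  exists2 u, u < m & tt (i* m+u) != tt (j* m+u).
Proof.
move=> Hij Hd HD Hm Hlt.
have HB : 0 < 2 ^ b by rewrite expn_gt0.
have [s Hs Hne] := @sync4 (i * m %/ 2 ^ b) (D * m) (ltac:(by rewrite oddM HD Hm)).
exists (2 ^ b * s); first by nia.
have Ej : j * m + 2 ^ b * s = (i * m + 2 ^ b * s) + 2 ^ b * (D * m).
  have -> : j = i + 2 ^ b * D by lia.
  lia.
rewrite Ej eq_sym shiftB divB_add //.
by rewrite eq_sym (addnAC (i * m %/ 2 ^ b)).
Qed.


Lemma witB (b m i s : nat) :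
  tt ((i * m) %/ 2 ^ b + s + m) != tt ((i * m) %/ 2 ^ b + s) ->
  tt (i * m + 2 ^ b * s) != tt ((i + 2 ^ b) * m + 2 ^ b * s).
Proof.
move=> H.
have HB : 0 < 2 ^ b by rewrite expn_gt0.
have -> : (i + 2 ^ b) * m + 2 ^ b * s = (i * m + 2 ^ b * s) + 2 ^ b * m by lia.
by rewrite eq_sym shiftB divB_add.
Qed.

Lemma witS1 (c i : nat) : 0 < c ->
  (i * (3 * 2 ^ c + 1)) %/ 2 ^ c.+1 + 3 <= 2 ^ c.+1 ->
  exists2 u, u < 3 * 2 ^ c + 1 &
    tt (i * (3 * 2 ^ c + 1) + u) != tt ((i + 2 ^ c.+1) * (3 * 2 ^ c + 1) + u).
Proof.
move=> Hc Hcond.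
set m := 3 * 2 ^ c + 1 in Hcond *.
set X0 := (i * m) %/ 2 ^ c.+1 in Hcond *.
have HA : 2 ^ c.+1 = 2 * 2 ^ c by rewrite expnS.
pose s := (odd X0 : nat).
have Hs : s <= 1 by rewrite /s; case: (odd X0).
have Hev : ~~ odd (X0 + s) by rewrite /s oddD; case: (odd X0).
exists (2 ^ c.+1 * s); first by rewrite /m; nia.
apply: witB.
rewrite -/X0.
have EX : X0 + s = 2 * (X0 + s)./2.
  by rewrite -[LHS]odd_double_half (negbTE Hev) add0n mul2n.
have -> : X0 + s + m = 3 * 2 ^ c + (X0 + s + 1) by rewrite /m; lia.
rewrite L3H; last by lia.
rewrite EX tt2S tt2.
by case: (tt _).
Qed.

Lemma witS2 (a i : nat) :
  (i * (2 * 2 ^ a + 3)) %/ 2 ^ a + 5 <= 2 * 2 ^ a ->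
  exists2 u, u < 2 * 2 ^ a + 3 &
    tt (i * (2 * 2 ^ a + 3) + u) != tt ((i + 2 ^ a) * (2 * 2 ^ a + 3) + u).
Proof.
move=> Hcond.
set m := 2 * 2 ^ a + 3 in Hcond *.
set X0 := (i * m) %/ 2 ^ a in Hcond *.
have HY := Y3 X0.
pose s := if tt X0 == tt (X0 + 3) then 0 else 1.
have Hs : s <= 1 by rewrite /s; case: ifP.
have Heq : tt (X0 + s) == tt (X0 + s + 3).
  rewrite /s; case: ifP => [H|H]; first by rewrite !addn0.
  by rewrite H /= in HY; rewrite (_ : X0 + 1 + 3 = X0 + 4) //; lia.
exists (2 ^ a * s); first by rewrite /m; nia.
apply: witB.
rewrite -/X0.
have -> : X0 + s + m = 2 ^ a.+1 * 1 + (X0 + s + 3) by rewrite /m expnS; lia.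
rewrite ttE; last by rewrite expnS; lia.
move/eqP: Heq => ->.
by rewrite tt1; case: (tt _).
Qed.

Lemma decomp2 d : 0 < d -> exists b D, odd D /\ d = 2 ^ b * D.
Proof.
elim/ltn_ind: d => d IH Hd.
case Ho: (odd d); first by exists 0, d; rewrite expn0 mul1n.
have Ed : d = 2 * d./2 by rewrite -[LHS]odd_double_half Ho add0n mul2n.
have H1 : d./2 < d by lia.
have H2 : 0 < d./2 by lia.
have [b [D [HD E]]] := IH _ H1 H2.
by exists b.+1, D; split => //; rewrite Ed E expnS mulnA.
Qed.


Lemma blk_nth k m i u : i < k -> u < m ->
  nth false (take m (drop (i * m) (mkseq tt (k * m)))) u = tt (i * m + u).
Proof.
move=> Hi Hu.
rewrite nth_take // nth_drop nth_mkseq //; nia.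
Qed.

Lemma core_inF k m : 0 < k -> odd m ->
  (forall i j, i < j -> j < k -> exists2 u, u < m & tt (i * m + u) != tt (j * m + u)) ->
  inF k m.
Proof.
move=> Hk Hm Hw.
rewrite /inF Hm /=.
have Ew : tm_factor 1 (k * m) = mkseq tt (k * m).
  rewrite /tm_factor subSS subn0; apply: eq_mkseq => j.
  by rewrite /tm add1n.
rewrite /is_antipower Ew size_mkseq mulKn // eqxx /=.
rewrite map_inj_in_uniq ?iota_uniq // => i j; rewrite !mem_iota !add0n => Hi Hj Heq.
case: (ltngtP i j) => // Hij.
- have [u Hu Hne] := Hw i j Hij Hj.
  have := congr1 (fun s => nth false s u) Heq => /=.
  rewrite !blk_nth // => E.
  by rewrite E eqxx in Hne.
- have [u Hu Hne] := Hw j i Hij Hi.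
  have := congr1 (fun s => nth false s u) Heq => /=.
  rewrite !blk_nth // => E.
  by rewrite E eqxx in Hne.
Qed.

Lemma assemble a k m : 0 < k -> odd m -> k <= 2 * 2 ^ a -> 3 * 2 ^ a <= 2 * (m - 1) ->
  (forall i, i + 2 ^ a < k -> exists2 u, u < m & tt (i * m + u) != tt ((i + 2 ^ a) * m + u)) ->
  inF k m.
Proof.
move=> Hk Hm HkA Hma Hsp.
apply: core_inF => // i j Hij Hj.
have [b [D [HD Ed]]] := @decomp2 (j - i) (ltac:(lia)).
case: (ltnP b a) => Hba.
- apply: (@witG m i j b D) => //.
  have : 2 ^ b.+1 <= 2 ^ a by rewrite leq_exp2l.
  rewrite expnS; lia.
- have Hpow : 2 ^ a <= 2 ^ b by rewrite leq_exp2l.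
  have HD1 : 0 < D by case: D HD Ed.
  have Hb : b = a.
    apply/eqP; rewrite eqn_leq Hba andbT; apply: contraT; rewrite -ltnNge => Hab.
    have : 2 ^ a.+1 <= 2 ^ b by rewrite leq_exp2l.
    rewrite expnS; nia.
  subst b.
  have HD' : D = 1.
    have : D < 2 by nia.
    by case: D HD {Ed HD1} => [|[|]].
  subst D.
  have -> : j = i + 2 ^ a by lia.
  apply: Hsp; lia.
Qed.


Lemma gamma_le k m : inF k m -> gamma k <= m.
Proof.
move=> H; rewrite /gamma; case: excluded_middle_informative => [E|E].
- by case: ex_minnP => n _ Hmin; exact: Hmin.
- by exfalso; apply: E; exists m.
Qed.

Lemma I1 c k : 0 < c -> 0 < k -> k <= 2 * 2 ^ c.+1 ->
  (forall i, i + 2 ^ c.+1 < k -> i * (3 * 2 ^ c + 1) < (2 ^ c.+1 - 2) * 2 ^ c.+1) ->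
  inF k (3 * 2 ^ c + 1).
Proof.
move=> Hc Hk HkA Hsp.
have Hev : ~~ odd (2 ^ c) by rewrite oddX; case: c Hc {HkA Hsp}.
apply: (@assemble c.+1) => //.
- by rewrite oddD oddM (negbTE Hev).
- rewrite expnS; lia.
- move=> i Hi; apply: witS1 => //.
  have HA : 0 < 2 ^ c.+1 by rewrite expn_gt0.
  have := Hsp i Hi; rewrite -ltn_divLR //; lia.
Qed.

Lemma I2 a k : 0 < k -> k <= 2 * 2 ^ a ->
  (forall i, i + 2 ^ a < k -> i * (2 * 2 ^ a + 3) < (2 * 2 ^ a - 4) * 2 ^ a) ->
  inF k (2 * 2 ^ a + 3).
Proof.
move=> Hk HkA Hsp.
apply: (@assemble a) => //.
- by rewrite oddD oddM.
- lia.
- move=> i Hi; apply: witS2 => //.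
  have HA : 0 < 2 ^ a by rewrite expn_gt0.
  have := Hsp i Hi; rewrite -ltn_divLR //; lia.
Qed.

Lemma I3 a k : 0 < a -> 0 < k -> k <= 2 * 2 ^ a -> inF k (3 * 2 ^ a + 1).
Proof.
move=> Ha Hk HkA.
have Hev : ~~ odd (2 ^ a) by rewrite oddX; case: a Ha {HkA}.
apply: (@assemble a.+1) => //.
- by rewrite oddD oddM (negbTE Hev).
- rewrite expnS; lia.
- rewrite expnS; lia.
- move=> i Hi; exfalso; rewrite expnS in Hi; lia.
Qed.

Local Open Scope ring_scope.

Lemma rat_fin9 (g k : nat) (eps : rat) : (0 < k)%N -> (10 * g <= 9 * k + 40)%N -> 4%:R < k%:R * eps ->
  (g%:R / k%:R < 9%:R / 10%:R + eps).
Proof.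
move=> Hk Hg He.
have Hk' : (0 : rat) < k%:R by rewrite ltr0n.
have Hg' : (10%:R * g%:R <= 9%:R * k%:R + 40%:R :> rat) by rewrite -!natrM -natrD ler_nat.
rewrite ltr_pdivrMr //.
lra.
Qed.

Lemma rat_fin3 (g k : nat) (eps : rat) : (0 < k)%N -> (2 * g <= 3 * k + 8)%N -> 4%:R < k%:R * eps ->
  (g%:R / k%:R < 3%:R / 2%:R + eps).
Proof.
move=> Hk Hg He.
have Hk' : (0 : rat) < k%:R by rewrite ltr0n.
have Hg' : (2%:R * g%:R <= 3%:R * k%:R + 8%:R :> rat) by rewrite -!natrM -natrD ler_nat.
rewrite ltr_pdivrMr //.
lra.
Qed.

Lemma arch (eps : rat) : 0 < eps -> exists n : nat, forall k : nat, (n <= k)%N -> 4%:R < k%:R * eps.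
Proof.
move=> He.
exists (Num.bound (4%:R / eps)).
move=> k Hk.
have H1 := @archi_boundP _ (4%:R / eps) (ltW (divr_gt0 (ltr0n _ 4) He)).
have H2 : (Num.bound (4%:R / eps))%:R <= (k%:R : rat) by rewrite ler_nat.
have H3 : 4%:R / eps < k%:R by apply: lt_le_trans H2.
by rewrite -ltr_pdivrMr.
Qed.

Local Close Scope ring_scope.

Lemma part1 N : exists k, N <= k /\ 0 < k /\ 10 * gamma k <= 9 * k + 40.
Proof.
set c := N.+1.
have Hc : c < 2 ^ c by apply: ltn_expl.
have HS : 2 ^ c.+1 = 2 * 2 ^ c by rewrite expnS.
have Hin : forall k, k <= 4 * 2 ^ c -> (forall i, i + 2 * 2 ^ c < k -> i * (3 * 2 ^ c + 1) < (2 * 2 ^ c - 2) * (2 * 2 ^ c)) ->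
    0 < k -> inF k (3 * 2 ^ c + 1).
  move=> k Hk Hsp Hk0; apply: I1 => //; rewrite HS //; lia.
move: Hin; rewrite -/c; move: Hc; move: (2 ^ c) => H Hc Hin.
set j := (4 * H - 8) %/ 3.
have Hj1 : j * 3 <= 4 * H - 8 by apply: leq_divM.
have Hj2 : 4 * H - 8 < j.+1 * 3 by apply: ltn_ceil.
exists (2 * H + j).
have Hk : inF (2 * H + j) (3 * H + 1).
  apply: Hin; [lia| |lia].
  move=> i Hi; nia.
have := @gamma_le _ _ Hk.
rewrite /c in Hc.
split; [lia|split;[lia|]].
lia.
Qed.

Lemma part2 k : 64 <= k -> 2 * gamma k <= 3 * k + 8.
Proof.
move=> Hk.
set a := trunc_log 2 (k - 1).
have HA1 : 2 ^ a <= k - 1 by apply: trunc_logP => //; lia.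
have HA2 : k - 1 < 2 ^ a.+1 by apply: trunc_log_ltn.
rewrite expnS in HA2.
have Ha : 0 < a by case: a HA1 HA2 => //=; lia.
case: (leqP (2 * k) (3 * 2 ^ a)) => Hc1.
-
  have [c Ec] : exists c, a = c.+1 by exists a.-1; lia.
  rewrite Ec expnS in HA1 HA2 Hc1.
  have Hc : 0 < c.
    case: c Ec HA1 HA2 Hc1 => // _; rewrite expn0; lia.
  have Hin : inF k (3 * 2 ^ c + 1).
    apply: I1 => //; first lia.
    - rewrite expnS; lia.
    - move=> i; rewrite expnS; move: HA1 HA2 Hc1; move: (2 ^ c) => H HA1 HA2 Hc1 Hi; nia.
  have := @gamma_le _ _ Hin; lia.
case: (leqP (k + 3) (2 * 2 ^ a)) => Hc2.
- have Hin : inF k (2 * 2 ^ a + 3).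
    apply: I2; [lia|lia|].
    move=> i; move: HA1 HA2 Hc1 Hc2; move: (2 ^ a) => A HA1 HA2 Hc1 Hc2 Hi; nia.
  have := @gamma_le _ _ Hin; lia.
- have Hin : inF k (3 * 2 ^ a + 1) by apply: I3 => //; lia.
  have := @gamma_le _ _ Hin; lia.
Qed.


Local Open Scope ring_scope.

Theorem theorem4 :
  (forall (eps : rat), 0 < eps -> forall N : nat, exists k : nat,
      (N <= k)%N /\ (gamma k)%:R / k%:R < 9%:R / 10%:R + eps) /\
  (forall (eps : rat), 0 < eps -> exists N : nat, forall k : nat,
      (N <= k)%N -> (gamma k)%:R / k%:R < 3%:R / 2%:R + eps).
Proof.
split.
- move=> eps He N.
  have [n0 Hn0] := @arch eps He.
  have [k [Hk [Hk0 Hg]]] := part1 (N + n0).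
  exists k; split; first by lia.
  apply: rat_fin9 => //.
  apply: Hn0; lia.
- move=> eps He.
  have [n0 Hn0] := @arch eps He.
  exists (64 + n0)%N => k Hk.
  apply: rat_fin3; [lia | apply: part2; lia | apply: Hn0; lia].
Qed.
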